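(* For every integer $n\geq 5$ and every $p>1$, $$\lambda_{1,p}(T_{n,4})>\lambda_{1,p}(T_{n,3}).$$
   Context: For $n>i\ge 3$, the tadpole graph $T_{n,i}$ is the graph on vertices $t_1,\dots,t_n$ with edges $t_n\sim t_{n-1}\sim\cdots\sim t_i\sim t_{i-1}\sim\cdots\sim t_2\sim t_1\sim t_i$ (a cycle of length $i$ with a path attached at $t_i$). For a finite connected graph $G$, $B(G)=\{x\in V(G):\deg x=1\}$, $C_B(G)=\{f\in\mathbb{R}^{V(G)}: f|_{B(G)}\equiv0\}$, and $$\lambda_{1,p}(G)=\min_{f\in C_B(G)\setminus\{0\}}\frac{\sum_{\{x,y\}\in E(G)}|f(x)-f(y)|^p}{\sum_{x\in V(G)}|f(x)|^p}.$$ *)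

(* Defs.v *)
From mathcomp Require Import all_boot all_order all_algebra.
From mathcomp Require Import all_classical all_reals all_analysis.
Set Implicit Arguments. Unset Strict Implicit. Unset Printing Implicit Defensive.
Import Order.TTheory GRing.Theory Num.Theory.
Local Open Scope classical_set_scope.
Local Open Scope ring_scope.

(* Tadpole graph T_{n,i}: vertex t_k (1 <= k <= n) is the ordinal k-1.
   Edges: t_k ~ t_{k+1} (1 <= k < n), and t_1 ~ t_i. *)
Definition tadpole_adj (n i : nat) : rel 'I_n :=
  fun a b =>
    [|| (a.+1 == b :> nat), (b.+1 == a :> nat),
        ((a == 0 :> nat) && (b == i.-1 :> nat))
      | ((b == 0 :> nat) && (a == i.-1 :> nat))].

Arguments tadpole_adj : clear implicits.

Definition deg (n : nat) (G : rel 'I_n) (x : 'I_n) : nat :=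
  #|[set y | G x y]|.

Definition in_CB (R : realType) (n : nat) (G : rel 'I_n) (f : 'I_n -> R) : Prop :=
  forall x, deg G x = 1%N -> f x = 0.

Definition rayleigh (R : realType) (n : nat) (G : rel 'I_n) (p : R)
    (f : 'I_n -> R) : R :=
  (\sum_(x : 'I_n) \sum_(y : 'I_n | (x < y)%N && G x y) `|f x - f y| `^ p)
  / (\sum_(x : 'I_n) `|f x| `^ p).

(* lambda_{1,p}(G): the minimum (here: the infimum, which is attained) of the
   Rayleigh quotient over nonzero f in C_B(G). *)
Definition lambda1p (R : realType) (n : nat) (G : rel 'I_n) (p : R) : R :=
  inf [set r : R | exists f : 'I_n -> R,
        [/\ in_CB G f, (exists x, f x != 0) & r = rayleigh G p f]].

(* Main.v *)
Require Import Defs.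
From mathcomp Require Import all_boot all_order all_algebra.
From mathcomp Require Import all_classical all_reals all_analysis.
From mathcomp Require Import ring lra zify.
Import Order.TTheory GRing.Theory Num.Theory.
Import numFieldNormedType.Exports.

Lemma adj_split (i x y : nat) : (3 <= i)%N -> ((x < y) && [|| x.+1 == y, y.+1 == x, (x == 0) && (y == i.-1) | (y == 0) && (x == i.-1)]) = (y == x.+1) || ((x == 0) && (y == i.-1)).
Proof. move=> i3; apply/idP/idP => h; lia. Qed.
Lemma adj_disj (i x y : nat) : (3 <= i)%N -> (y == x.+1) && ((x == 0) && (y == i.-1)) = false.
Proof. move=> i3; apply/negP => h; lia. Qed.


Local Open Scope classical_set_scope.
Local Open Scope ring_scope.
Set Implicit Arguments. Unset Strict Implicit. Unset Printing Implicit Defensive.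


Lemma cont_abspow (R : realType) (p : R) : 0 < p -> continuous (fun x : R => `|x| `^ p).
Proof.
move=> p0 x.
have [->|x0] := eqVneq x 0.
  rewrite /continuous_at normr0 powR0 ?gt_eqF//.
  apply/cvgrPdist_lt => e e0.
  have d0 : 0 < e `^ (p^-1) by rewrite powR_gt0.
  near=> t.
  rewrite sub0r normrN ger0_norm ?powR_ge0//.
  have he : (e `^ (p^-1)) `^ p = e by rewrite -powRrM mulVf ?gt_eqF// powRr1// ltW.
  rewrite -[X in _ < X]he.
  apply: gt0_ltr_powR => //; rewrite ?nnegrE ?powR_ge0//.
  idtac.
have nx : 0 < `|x| by rewrite normr_gt0.
have gx : `|x| `^ p = expR (p * ln `|x|) by rewrite /powR gt_eqF.
apply: (@cvg_trans _ ((fun y : R => expR (p * ln `|y|)) @ x)).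
  apply: near_eq_cvg; near=> y.
  rewrite /powR gt_eqF//.
  rewrite normr_gt0. near: y.
  case: (ltgtP x 0) x0 => // [xn|xp] _.
    by apply: filterS (lt_nbhsl xn) => y /lt_eqF ->.
  by apply: filterS (lt_nbhsr xp) => y /gt_eqF ->.
rewrite gx.
apply: (@continuous_comp _ _ _ (fun y : R => p * ln `|y|) expR); last exact: continuous_expR.
apply: continuousM; first exact: cvg_cst.
apply: continuous_comp; last exact: continuous_ln. exact: norm_continuous.
Unshelve. all: end_near. Qed.

Lemma cont_sum (R : realType) (T : topologicalType) (I : Type) (r : seq I) (P : pred I)
  (F : I -> T -> R) : (forall i, continuous (F i)) ->
  continuous (fun t => \sum_(i <- r | P i) F i t).
Proof.
move=> cF; elim: r => [|a r IH] t.
  under eq_fun do rewrite big_nil. exact: cvg_cst.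
under eq_fun do rewrite big_cons.
case: (P a).
  exact: (continuousD (cF a t) (IH t)).
exact: IH.
Qed.

Definition PTop (R : realType) (n : nat) := prod_topology (fun _ : 'I_n => R).

Lemma cont_proj (R : realType) (n : nat) (i : 'I_n) : continuous (fun f : PTop R n => f i).
Proof. exact: (@proj_continuous _ (fun _ : 'I_n => R) i). Qed.

Definition numer (R : realType) (n : nat) (G : rel 'I_n) (p : R) (f : 'I_n -> R) : R :=
  \sum_(x : 'I_n) \sum_(y : 'I_n | (x < y)%N && G x y) `|f x - f y| `^ p.
Definition denom (R : realType) (n : nat) (p : R) (f : 'I_n -> R) : R :=
  \sum_(x : 'I_n) `|f x| `^ p.

Lemma rayleighE (R : realType) (n : nat) (G : rel 'I_n) (p : R) f :
  rayleigh G p f = numer G p f / denom p f.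
Proof. by []. Qed.

Lemma numer_ge0 (R : realType) (n : nat) (G : rel 'I_n) (p : R) f : 0 <= numer G p f.
Proof. by apply: sumr_ge0 => x _; apply: sumr_ge0 => y _; exact: powR_ge0. Qed.

Lemma denom_ge0 (R : realType) (n : nat) (p : R) (f : 'I_n -> R) : 0 <= denom p f.
Proof. by apply: sumr_ge0 => x _; exact: powR_ge0. Qed.

Lemma denom_gt0 (R : realType) (n : nat) (p : R) (f : 'I_n -> R) : 0 < p -> (exists x, f x != 0) -> 0 < denom p f.
Proof.
move=> p0 [x fx]; rewrite /denom (bigD1 x) //=.
apply: ltr_wpDr; first by apply: sumr_ge0 => y _; exact: powR_ge0.
by apply: powR_gt0; rewrite normr_gt0.
Qed.

Lemma denom_term (R : realType) (n : nat) (p : R) (f : 'I_n -> R) x : `|f x| `^ p <= denom p f.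
Proof.
rewrite /denom (bigD1 x) //= lerDl.
by apply: sumr_ge0 => y _; exact: powR_ge0.
Qed.

Lemma abspowM (R : realType) (p s a : R) : 0 <= s -> `|s * a| `^ p = s `^ p * `|a| `^ p.
Proof. by move=> s0; rewrite normrM ger0_norm // powRM. Qed.

Lemma scale_props (R : realType) (n : nat) (G : rel 'I_n) (p : R) (f : 'I_n -> R) :
  0 < p -> (exists x, f x != 0) ->
  let s := denom p f `^ (- p^-1) in
  [/\ denom p (fun x => s * f x) = 1,
      numer G p (fun x => s * f x) = s `^ p * numer G p f &
      rayleigh G p (fun x => s * f x) = rayleigh G p f].
Proof.
move=> p0 fnz s.
have D0 := denom_gt0 p0 fnz.
have s0 : 0 <= s by exact: powR_ge0.
have sp : s `^ p * denom p f = 1.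
  rewrite /s -powRrM mulNr mulVf ?gt_eqF // powRN powRr1 ?ltW //.
  by rewrite mulVf ?gt_eqF.
have dE : denom p (fun x => s * f x) = 1.
  rewrite /denom; under eq_bigr do rewrite abspowM //.
  by rewrite -mulr_sumr.
have nE : numer G p (fun x => s * f x) = s `^ p * numer G p f.
  rewrite /numer mulr_sumr; apply: eq_bigr => x _; rewrite mulr_sumr.
  by apply: eq_bigr => y _; rewrite -mulrBr abspowM.
split => //.
rewrite !rayleighE dE nE divr1.
have -> : s `^ p = (denom p f)^-1.
  by apply: (mulIf (x:= denom p f)); rewrite ?gt_eqF // sp mulVf ?gt_eqF.
by rewrite mulrC.
Qed.

Lemma cont_numer (R : realType) (n : nat) (G : rel 'I_n) (p : R) : 0 < p ->
  continuous (fun f : PTop R n => numer G p f).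
Proof.
move=> p0; rewrite /numer.
apply: cont_sum => x; apply: cont_sum => y f.
apply: (@continuous_comp _ _ _ (fun f : PTop R n => f x - f y) (fun t : R => `|t| `^ p)).
  by apply: continuousB; exact: cont_proj.
exact: cont_abspow.
Qed.

Lemma cont_denom (R : realType) (n : nat) (p : R) : 0 < p ->
  continuous (fun f : PTop R n => denom p f).
Proof.
move=> p0; rewrite /denom.
apply: cont_sum => x f.
apply: (@continuous_comp _ _ _ (fun f : PTop R n => f x) (fun t : R => `|t| `^ p)).
  exact: cont_proj.
exact: cont_abspow.
Qed.

Lemma exists_minimizer (R : realType) (n : nat) (G : rel 'I_n) (p : R) : 0 < p ->
  (exists f0 : 'I_n -> R, in_CB G f0 /\ exists x, f0 x != 0) ->
  exists f : 'I_n -> R, [/\ in_CB G f, (exists x, f x != 0) &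
    forall g : 'I_n -> R, in_CB G g -> (exists x, g x != 0) ->
      rayleigh G p f <= rayleigh G p g].
Proof.
move=> p0 [f0 [f0B f0nz]].
pose B (i : 'I_n) : set R := if deg G i == 1%N then [set 0] else [set x | x \in `[-1, 1]%R].
pose K : set (PTop R n) := [set f : PTop R n | forall i, B i (f i)] `&` [set f | denom p f = 1].
have Kc : compact K.
  apply: compact_closedI.
    have := @tychonoff 'I_n (fun _ : 'I_n => R) B.
    apply => i.
    rewrite /B; case: ifP => _; [exact: compact_set1 | exact: segment_compact].
  have : closed ((fun f : PTop R n => denom p f) @^-1` [set x : R | x = 1]).
    apply: preimage_closed; last exact: closed_eq.
    by move=> f _; exact: cont_denom.
  by [].
have inK : forall g : 'I_n -> R, in_CB G g -> (exists x, g x != 0) ->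
    let s := denom p g `^ (- p^-1) in K (fun x => s * g x).
  move=> g gB gnz s; have [dE _ _] := scale_props G p0 gnz.
  split; last exact: dE.
  move=> i; rewrite /B; case: ifP => [/eqP di|_].
    by rewrite /= (gB i di) mulr0.
  rewrite /= in_itv /= -ler_norml.
  rewrite leNgt; apply/negP => h1.
  have := denom_term p (fun x => s * g x) i; rewrite dE.
  apply/negP; rewrite -ltNge.
  have -> : (1 : R) = 1 `^ p by rewrite powR1.
  by apply: gt0_ltr_powR => //; rewrite nnegrE.
have K0 : K !=set0 by exists (fun x => denom p f0 `^ (- p^-1) * f0 x); exact: inK.
have [c cK cmin] := compact_EVT_min K0 Kc (continuous_subspaceT (@cont_numer _ _ G _ p0)).
have [cB cD] : (forall i, B i (c i)) /\ denom p c = 1 by move: cK; rewrite inE => -[].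
have cnz : exists x, c x != 0.
  apply: contrapT => hz.
  move: cD; rewrite /denom big1 => [/esym/eqP|x _]; first by rewrite oner_eq0.
  have -> : c x = 0.
    by apply/eqP; apply: contrapT => h; apply: hz; exists x; exact/negP.
  by rewrite normr0 powR0 // gt_eqF.
exists c; split => //.
  by move=> x dx; have := cB x; rewrite /B dx eqxx.
move=> g gB gnz.
have [dE nE rE] := scale_props G p0 gnz.
rewrite -rE !rayleighE cD dE !divr1.
by apply: cmin; rewrite inE; exact: inK.
Qed.



Section NatPart.
Variables (R : realType) (p : R) (L : nat).
Hypothesis p1 : 1 < p.
Hypothesis L4 : (4 <= L)%N.

Definition ee (a b : R) := `|a - b| `^ p.
Definition ww (a : R) := `|a| `^ p.
Definition pathsum (F : nat -> R) := \sum_(0 <= k < L) ee (F k) (F k.+1).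
Definition dsum (F : nat -> R) := \sum_(0 <= k < L.+1) ww (F k).
Definition N4 F := pathsum F + ee (F 0%N) (F 3%N).
Definition N3 F := pathsum F + ee (F 0%N) (F 2%N).
Definition feas (F : nat -> R) := F L = 0 /\ exists k, (k <= L)%N /\ F k != 0.
Definition PT (F : nat -> R) := \sum_(3 <= k < L) ee (F k) (F k.+1).
Definition DT (F : nat -> R) := \sum_(3 <= k < L.+1) ww (F k).

Lemma p0 : 0 < p. Proof. by apply: lt_trans p1. Qed.

Lemma ee_ge0 a b : 0 <= ee a b. Proof. exact: powR_ge0. Qed.
Lemma ww_ge0 a : 0 <= ww a. Proof. exact: powR_ge0. Qed.
Lemma eeC a b : ee a b = ee b a. Proof. by rewrite /ee distrC. Qed.
Lemma ee0 a : ee a a = 0. Proof. by rewrite /ee subrr normr0 powR0 // gt_eqF // p0. Qed.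
Lemma ww0 : ww 0 = 0. Proof. by rewrite /ww normr0 powR0 // gt_eqF // p0. Qed.
Lemma ee_gt0 a b : a != b -> 0 < ee a b.
Proof. by move=> ab; apply: powR_gt0; rewrite normr_gt0 subr_eq0. Qed.
Lemma ee_eq0 a b : ee a b = 0 -> a = b.
Proof. by move/powR_eq0_eq0/eqP; rewrite normr_eq0 subr_eq0 => /eqP. Qed.

Lemma split_path F : pathsum F = ee (F 0%N) (F 1%N) + ee (F 1%N) (F 2%N) + ee (F 2%N) (F 3%N) + PT F.
Proof.
rewrite /pathsum /PT (big_cat_nat _ (n:=3)) //=; last by lia.
by congr (_ + _); rewrite big_mkord !big_ord_recr big_ord0 /= add0r.
Qed.

Lemma split_dsum F : dsum F = ww (F 0%N) + ww (F 1%N) + ww (F 2%N) + DT F.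
Proof.
rewrite /dsum /DT (big_cat_nat _ (n:=3)) //=; last by lia.
by congr (_ + _); rewrite big_mkord !big_ord_recr big_ord0 /= add0r.
Qed.

Lemma PT_eq F G : (forall k, (3 <= k)%N -> F k = G k) -> PT F = PT G.
Proof.
move=> h; apply: eq_big_nat => k /andP[k3 _]; rewrite !h //; lia.
Qed.

Lemma DT_eq F G : (forall k, (3 <= k)%N -> F k = G k) -> DT F = DT G.
Proof. by move=> h; apply: eq_big_nat => k /andP[k3 _]; rewrite h. Qed.

Lemma PT_ge0 F : 0 <= PT F. Proof. by apply: sumr_ge0 => k _; exact: ee_ge0. Qed.
Lemma DT_ge0 F : 0 <= DT F. Proof. by apply: sumr_ge0 => k _; exact: ww_ge0. Qed.
Lemma pathsum_ge0 F : 0 <= pathsum F. Proof. by apply: sumr_ge0 => k _; exact: ee_ge0. Qed.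
Lemma dsum_ge0 F : 0 <= dsum F. Proof. by apply: sumr_ge0 => k _; exact: ww_ge0. Qed.

Lemma term_le_sum (m : nat) (u : nat -> R) k : (forall i, 0 <= u i) -> (k < m)%N ->
  u k <= \sum_(0 <= i < m) u i.
Proof.
move=> u0 km; rewrite big_mkord (bigD1 (Ordinal km)) //= lerDl.
by apply: sumr_ge0 => i _.
Qed.

Lemma sum_lt (m : nat) (u v : nat -> R) k : (forall i, (i < m)%N -> u i <= v i) ->
  (k < m)%N -> u k < v k -> \sum_(0 <= i < m) u i < \sum_(0 <= i < m) v i.
Proof.
move=> uv km ukv; rewrite !big_mkord (bigD1 (Ordinal km)) //= [X in _ < X](bigD1 (Ordinal km)) //=.
apply: ltr_leD => //; apply: ler_sum => i _; exact: uv.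
Qed.

Lemma dsum_gt0 F : feas F -> 0 < dsum F.
Proof.
move=> [_ [k [kL Fk]]].
have := @term_le_sum L.+1 (fun i => ww (F i)) k (fun i => ww_ge0 (F i)) kL.
apply: lt_le_trans.
by apply: powR_gt0; rewrite normr_gt0.
Qed.

Lemma pathsum_gt0 F : feas F -> 0 < pathsum F.
Proof.
move=> [FL [k [kL Fk]]].
rewrite lt_neqAle pathsum_ge0 andbT; apply/negP => /eqP /esym h.
have hz : forall i, (i < L)%N -> F i = F i.+1.
  move=> i iL; apply: ee_eq0; apply/eqP; rewrite eq_le ee_ge0 andbT.
  by rewrite -h; apply: (@term_le_sum L (fun i => ee (F i) (F i.+1))) => // j; exact: ee_ge0.
have hc : forall j, (j <= L)%N -> F (L - j)%N = 0.
  elim=> [_|j IH jL]; first by rewrite subn0.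
  rewrite hz; last by lia.
  by rewrite -subSn ?subSS ?IH //; lia.
by move: Fk; rewrite -(subKn kL) hc ?eqxx // leq_subr.
Qed.

Lemma N4_gt0 F : feas F -> 0 < N4 F.
Proof. by move=> fF; rewrite /N4; apply: ltr_wpDr; [exact: ee_ge0 | exact: pathsum_gt0]. Qed.


Definition mod3 (x0 x1 x2 : R) (H : nat -> R) : nat -> R :=
  fun k => if k == 0%N then x0 else if k == 1%N then x1 else if k == 2%N then x2 else H k.

Lemma mod3_ge3 x0 x1 x2 H k : (3 <= k)%N -> mod3 x0 x1 x2 H k = H k.
Proof. by case: k => [|[|[|k]]]. Qed.

Lemma N4E F : N4 F = ee (F 0%N) (F 1%N) + ee (F 1%N) (F 2%N) + ee (F 2%N) (F 3%N) + PT F + ee (F 0%N) (F 3%N).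
Proof. by rewrite /N4 split_path. Qed.

Lemma N4_mod3 x0 x1 x2 H : N4 (mod3 x0 x1 x2 H) =
  ee x0 x1 + ee x1 x2 + ee x2 (H 3%N) + PT H + ee x0 (H 3%N).
Proof. by rewrite N4E (@PT_eq _ H) // => k k3; rewrite mod3_ge3. Qed.

Lemma D_mod3 x0 x1 x2 H : dsum (mod3 x0 x1 x2 H) = ww x0 + ww x1 + ww x2 + DT H.
Proof. by rewrite split_dsum (@DT_eq _ H) // => k k3; rewrite mod3_ge3. Qed.

Lemma mod3_L x0 x1 x2 H : mod3 x0 x1 x2 H L = H L.
Proof. by rewrite mod3_ge3 //; lia. Qed.

Lemma ww_le a b : 0 <= a -> a <= b -> ww a <= ww b.
Proof.
move=> a0 ab; rewrite /ww !ger0_norm //; last exact: le_trans ab.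
by apply: ge0_ler_powR; rewrite ?nnegrE ?(ltW p0) // (le_trans a0).
Qed.

Lemma ww_lt a b : 0 <= a -> a < b -> ww a < ww b.
Proof.
move=> a0 ab; rewrite /ww !ger0_norm //; last exact: ltW (le_lt_trans a0 ab).
by apply: gt0_ltr_powR; rewrite ?nnegrE ?p0 // ltW // (le_lt_trans a0).
Qed.

Section Core.
Variable lam : R.
Hypothesis W : forall G, G L = 0 -> lam * dsum G <= N4 G.

Lemma sym_step A : feas A -> (forall k, 0 <= A k) -> N4 A <= lam * dsum A ->
  exists H, [/\ feas H, forall k, 0 <= H k, H 0%N = H 2%N & N4 H <= lam * dsum H].
Proof.
move=> fA A0 hA.
have [e02|n02] := eqVneq (A 0%N) (A 2%N); first by exists A.
pose H1 := mod3 (A 0%N) (A 1%N) (A 0%N) A.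
pose H3 := mod3 (A 2%N) (A 1%N) (A 2%N) A.
have AL : A L = 0 by case: fA.
have W1 := W (G:=H1) (etrans (mod3_L _ _ _ _) AL).
have W3 := W (G:=H3) (etrans (mod3_L _ _ _ _) AL).
have nE : N4 H1 + N4 H3 = 2 * N4 A.
  rewrite !N4_mod3 N4E (eeC (A 1%N) (A 0%N)) (eeC (A 2%N) (A 1%N)); lra.
have dE : dsum H1 + dsum H3 = 2 * dsum A.
  rewrite !D_mod3 split_dsum; lra.
have lE : lam * dsum H1 + lam * dsum H3 = 2 * (lam * dsum A).
  by rewrite -mulrDr dE; ring.
have h1 : N4 H1 <= lam * dsum H1 by lra.
have h3 : N4 H3 <= lam * dsum H3 by lra.
have [z0|nz0] := eqVneq (A 0%N) 0.
- exists H3; split => //.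
  + split; first by rewrite /H3 /H1 mod3_L.
    by exists 0%N; split => //=; rewrite -z0 eq_sym.
  + by move=> k; rewrite /H3 /H1 /mod3; do ![case: ifP => _]; exact: A0.
- exists H1; split => //.
  + split; first by rewrite /H3 /H1 mod3_L.
    by exists 0%N; split => //=.
  + by move=> k; rewrite /H3 /H1 /mod3; do ![case: ifP => _]; exact: A0.
Qed.


Lemma ee_abs a b : ee `|a| `|b| <= ee a b.
Proof.
rewrite /ee; apply: ge0_ler_powR; rewrite ?nnegrE ?normr_ge0 ?(ltW p0) //.
exact: ler_dist_dist.
Qed.

Lemma core F : feas F -> N4 F <= lam * dsum F ->
  exists G, feas G /\ N3 G < lam * dsum G.
Proof.
move=> fF hF.
pose A := fun k => `|F k|.
have fA : feas A.
  case: fF => FL [k [kL Fk]]; split; first by rewrite /A FL normr0.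
  by exists k; split => //; rewrite /A normr_eq0.
have A0 : forall k, 0 <= A k by move=> k; exact: normr_ge0.
have hA : N4 A <= lam * dsum A.
  have -> : dsum A = dsum F by apply: eq_big_nat => k _; rewrite /ww /A normr_id.
  apply: le_trans hF; rewrite /N4 /pathsum; apply: lerD; last exact: ee_abs.
  by apply: ler_sum_nat => k _; exact: ee_abs.
have [H [fH H0 Hs hH]] := sym_step fA A0 hA.
have Dp := dsum_gt0 fH.
have Np := N4_gt0 fH.
have lp : 0 < lam.
  by have := lt_le_trans Np hH; rewrite pmulr_lgt0.
have [eca|neca] := eqVneq (H 3%N) (H 0%N); last first.
  exists H; split => //.
  rewrite /N3 Hs ee0 addr0; apply: lt_le_trans hH.
  by rewrite /N4 ltrDl ee_gt0 // eq_sym.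
exfalso.
have HL : H L = 0 by case: fH.
have NH : N4 H = ee (H 0%N) (H 1%N) + ee (H 1%N) (H 0%N) + PT H.
  by rewrite N4E -Hs eca ee0 Hs; lra.
have DH : dsum H = ww (H 0%N) + ww (H 1%N) + ww (H 0%N) + DT H.
  by rewrite split_dsum -Hs.
case: (ltgtP (H 1%N) (H 0%N)) => [ba|ab|eab].
- (* b < a : raise b *)
  pose G := mod3 (H 0%N) (H 0%N) (H 0%N) H.
  have := W (G := G) (etrans (mod3_L _ _ _ _) HL).
  have NG : N4 G = PT H by rewrite N4_mod3 eca !ee0; lra.
  have dG : dsum G = dsum H + (ww (H 0%N) - ww (H 1%N)) by rewrite D_mod3 DH; lra.
  have wl : 0 <= ww (H 0%N) - ww (H 1%N) by rewrite subr_ge0 ww_le // ltW.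
  have e0 : 0 < ee (H 0%N) (H 1%N) by rewrite ee_gt0 // gt_eqF.
  rewrite dG mulrDr NG.
  have : 0 <= lam * (ww (H 0%N) - ww (H 1%N)) by rewrite mulr_ge0 // ltW.
  rewrite NH (eeC (H 1%N)) in hH; lra.
- (* b > a : raise a and c *)
  pose G := mod3 (H 1%N) (H 1%N) (H 1%N) H.
  have := W (G := G) (etrans (mod3_L _ _ _ _) HL).
  have NG : N4 G = N4 H by rewrite N4_mod3 NH eca !ee0 (eeC (H 1%N)); lra.
  have dG : dsum G = dsum H + 2 * (ww (H 1%N) - ww (H 0%N)) by rewrite D_mod3 DH; lra.
  have wl : 0 < ww (H 1%N) - ww (H 0%N) by rewrite subr_gt0 ww_lt.
  rewrite dG mulrDr NG.
  have : 0 < lam * (2 * (ww (H 1%N) - ww (H 0%N))) by rewrite mulr_gt0 // mulr_gt0.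
  lra.
-
  have [a0|apos] : H 0%N = 0 \/ 0 < H 0%N.
    by have := H0 0%N; rewrite le_eqVlt => /orP [/eqP <-|]; [left|right].
  + (* all cycle values vanish : fill *)
    have Hz : forall k, (k <= 3)%N -> H k = 0.
      by move=> [|[|[|[|k]]]] //= _; rewrite ?eab ?eca -?Hs.
    have exP : exists k, H k != 0 by case: fH => _ [k [_ hk]]; exists k.
    case: (ex_minnP exP) => m Hm mmin.
    have m4 : (4 <= m)%N.
      rewrite leqNgt; apply/negP => m3; move: Hm; rewrite Hz ?eqxx //; lia.
    have mL : (m < L)%N.
      have mle : (m <= L)%N.
        by case: fH => _ [k [kL hk]]; exact: leq_trans (mmin k hk) kL.
      rewrite ltn_neqAle mle andbT; apply/eqP => mE; move: Hm; rewrite mE HL eqxx.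
      by [].
    have Hlt : forall i, (i < m)%N -> H i = 0.
      move=> i im; apply/eqP; apply/negPn/negP => hi; have := mmin i hi; lia.
    pose G := fun k => if (k < m)%N then H m else H k.
    have GL : G L = 0.
      by rewrite /G ifF ?HL //; apply/negbTE; rewrite -leqNgt; lia.
    have := W (G := G) GL.
    have NG : N4 G < N4 H.
      rewrite /N4 /G ifT; last by lia.
      rewrite ifT; last by lia.
      rewrite ee0 a0 eca a0 ee0 !addr0.
      apply: (@sum_lt L _ _ m.-1).
      * move=> i iL; case: (ltnP i m) => im.
          case: ifP => i1m; first by rewrite ee0 ee_ge0.
          have -> : i.+1 = m by lia.
          by rewrite ee0 ee_ge0.
        have -> : (i.+1 < m)%N = false by apply/negbTE; lia.
        by [].
      * by lia.
      * rewrite ifT; last by lia.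
        have -> : (m.-1).+1 = m by lia.
        rewrite ltnn ee0 Hlt; last by lia.
        by rewrite ee_gt0 // eq_sym.
    have DG : dsum H <= dsum G.
      rewrite /dsum; apply: ler_sum_nat => i _; rewrite /G; case: ifP => im; last exact: lexx.
      by rewrite Hlt // ww0 ww_ge0.
    have : lam * dsum H <= lam * dsum G by rewrite ler_wpM2l // ltW.
    lra.
  + (* bulge at vertex 1 *)
    set a := H 0%N in eab eca Hs NH DH apos hH.
    pose s := (lam / 4) `^ ((p - 1)^-1).
    have s0 : 0 < s by apply: powR_gt0; rewrite divr_gt0.
    pose t := a * s.
    have t0 : 0 < t by rewrite mulr_gt0.
    pose G := mod3 a (a + t) a H.
    have := W (G := G) (etrans (mod3_L _ _ _ _) HL).
    rewrite eab ee0 in NH.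
    have NG : N4 G = N4 H + 2 * ee a (a + t).
      by rewrite N4_mod3 NH eca !ee0 (eeC (a + t)); lra.
    have dG : dsum G = dsum H + (ww (a + t) - ww a) by rewrite D_mod3 DH eab; lra.
    have eE : ee a (a + t) = a `^ p * s `^ p.
      rewrite /ee. have -> : a - (a + t) = - t by ring.
      by rewrite /ee normrN ger0_norm ?(ltW t0) // /t powRM // ltW.
    have wE : ww (a + t) = a `^ p * (1 + s) `^ p.
      have -> : a + t = a * (1 + s) by rewrite /t; ring.
      rewrite /ww ger0_norm; last by rewrite mulr_ge0 // ltW // ?addr_gt0.
      by rewrite powRM // ltW // addr_gt0.
    have wa : ww a = a `^ p by rewrite /ww ger0_norm // ltW.
    have sp : s `^ p = s * (lam / 4).
      have -> : p = 1 + (p - 1) by ring.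
      rewrite powRD; last by apply/implyP => _; rewrite gt_eqF.
      rewrite powRr1 ?(ltW s0) // /s -powRrM mulVf ?powRr1 //.
        by rewrite divr_ge0 // ltW.
      by rewrite subr_eq0 gt_eqF.
    have g1 : 1 + s <= (1 + s) `^ p.
      by apply: le1r_powR; [rewrite lerDl ltW | exact: ltW].
    have ap : 0 < a `^ p by exact: powR_gt0.
    have X0 : 0 < lam * (a `^ p * s) by rewrite mulr_gt0 // mulr_gt0.
    have h1 : lam * (a `^ p * s) <= lam * (a `^ p * (1 + s) `^ p - a `^ p).
      rewrite ler_wpM2l ?(ltW lp) //.
      have -> : a `^ p * s = a `^ p * (1 + s) - a `^ p by ring.
      by rewrite lerB // ler_wpM2l // ltW.
    have h2 : 2 * (a `^ p * (s * (lam / 4))) = lam * (a `^ p * s) / 2.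
      by field.
    rewrite dG NG mulrDr eE sp wE wa.
    lra.
Qed.
End Core.
End NatPart.



Lemma if_or (R : realType) (b1 b2 : bool) (g : R) : b1 && b2 = false ->
  (if b1 || b2 then g else 0) = (if b1 then g else 0) + (if b2 then g else 0).
Proof. by case: b1; case: b2 => //= _; rewrite ?addr0 ?add0r. Qed.

Lemma sum_ord_if (R : realType) (L c : nat) (h : 'I_L.+1 -> R) :
  \sum_(y : 'I_L.+1) (if val y == c then h y else 0) = if (c < L.+1)%N then h (inord c) else 0.
Proof.
case: ifP => cL.
  rewrite (bigD1 (inord c)) //= inordK // eqxx big1 ?addr0 // => y yc.
  rewrite ifF //; apply/negbTE; apply: contra yc => /eqP <-; by rewrite inord_val.
by apply: big1 => y _; rewrite ifF //; apply/negbTE; apply/eqP => yc; move: (ltn_ord y); rewrite yc cL.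
Qed.

Lemma numer_tad (R : realType) (L i : nat) (p : R) (f : 'I_L.+1 -> R) :
  (3 <= i)%N -> (i <= L.+1)%N ->
  numer (tadpole_adj L.+1 i) p f =
  pathsum p L (fun k => f (inord k)) + ee p (f (inord 0)) (f (inord i.-1)).
Proof.
move=> i3 iL.
have inner : forall x : 'I_L.+1,
    \sum_(y : 'I_L.+1 | (x < y)%N && tadpole_adj L.+1 i x y) `|f x - f y| `^ p =
    (if (x.+1 < L.+1)%N then ee p (f x) (f (inord x.+1)) else 0) +
    (if val x == 0%N then ee p (f x) (f (inord i.-1)) else 0).
  move=> x; rewrite big_mkcond /=.
  under eq_bigr => y _ do rewrite /tadpole_adj (adj_split _ _ _ i3) (if_or _ (adj_disj _ _ _ i3)).
  rewrite big_split /= sum_ord_if.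
  congr (_ + _).
  case: (eqVneq (val x) 0%N) => x0 /=.
    by rewrite sum_ord_if ifT //; lia.
  by apply: big1 => y _.
rewrite /numer (eq_bigr _ (fun x _ => inner x)) big_split /=.
rewrite sum_ord_if /=.
congr (_ + _).
rewrite big_ord_recr /= ltnn addr0 /pathsum big_mkord.
apply: eq_bigr => x _; rewrite ifT //; last by rewrite ltnS ltn_ord.
have -> : widen_ord (leqnSn L) x = inord x by apply: val_inj; rewrite /= inordK // ltnS ltnW.
by [].
Qed.

Lemma denom_tad (R : realType) (L : nat) (p : R) (f : 'I_L.+1 -> R) :
  denom p f = dsum p L (fun k => f (inord k)).
Proof. by rewrite /denom /dsum big_mkord; apply: eq_bigr => x _; rewrite inord_val. Qed.

Lemma two_nbrs (n : nat) (G : rel 'I_n) (x a b : 'I_n) : a != b -> G x a -> G x b -> deg G x != 1%N.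
Proof.
move=> ab ha hb.
have : (#|[set a; b]%SET| <= deg G x)%N.
  rewrite /deg; apply: subset_leq_card; apply/fintype.subsetP => y; rewrite !inE => /orP[]/eqP-> /=//.
have c2 : #|[set a; b]%SET| = 2%N by rewrite cards2 ab.
by rewrite c2; case: (deg G x) => [|[|]].
Qed.

Lemma inCB_tad (R : realType) (L i : nat) (f : 'I_L.+1 -> R) :
  (3 <= i)%N -> (i <= L)%N ->
  in_CB (tadpole_adj L.+1 i) f <-> f ord_max = 0.
Proof.
move=> i3 iL; split.
  move=> h; apply: h.
  rewrite /deg (@eq_card _ _ (pred1 (inord L.-1 : 'I_L.+1))) ?card1 // => y.
  rewrite !inE /tadpole_adj /= -val_eqE /= inordK; last by lia.
  have yL := ltn_ord y.
  apply/idP/idP; rewrite in_setE /= => h1; lia.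
move=> fL x dx.
have [xL|xL] := eqVneq x ord_max; first by rewrite xL.
exfalso; move/eqP: dx; apply/negP.
have xL' : (x < L)%N.
  have := ltn_ord x; rewrite ltnS leq_eqVlt => /orP[/eqP xe|//].
  by move: xL; rewrite -val_eqE /= xe eqxx.
case: (eqVneq (nat_of_ord x) 0%N) => x0.
  apply: (@two_nbrs _ _ _ (inord 1) (inord i.-1)).
  - rewrite -val_eqE /= !inordK; lia.
  - rewrite /tadpole_adj /= !inordK; lia.
  - rewrite /tadpole_adj /= !inordK; lia.
apply: (@two_nbrs _ _ _ (inord x.-1) (inord x.+1)).
- rewrite -val_eqE /= !inordK; lia.
- rewrite /tadpole_adj /= !inordK; lia.
- rewrite /tadpole_adj /= !inordK; lia.
Qed.

Lemma agree (R : realType) (p : R) (L : nat) (F G : nat -> R) : (3 <= L)%N ->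
  (forall k, (k <= L)%N -> F k = G k) ->
  [/\ N4 p L F = N4 p L G, N3 p L F = N3 p L G & dsum p L F = dsum p L G].
Proof.
move=> L3 h.
have pE : pathsum p L F = pathsum p L G.
  by apply: eq_big_nat => k /andP[_ kL]; rewrite !h // ltnW.
split; first by rewrite /N4 pE !h.
  by rewrite /N3 pE !h //; lia.
by apply: eq_big_nat => k /andP[_ kL]; rewrite h.
Qed.

Lemma rayleigh4 (R : realType) (p : R) (L : nat) (g : 'I_L.+1 -> R) : (4 <= L)%N ->
  rayleigh (tadpole_adj L.+1 4) p g = N4 p L (fun k => g (inord k)) / dsum p L (fun k => g (inord k)).
Proof. by move=> L4; rewrite rayleighE denom_tad numer_tad //; lia. Qed.

Lemma rayleigh3 (R : realType) (p : R) (L : nat) (g : 'I_L.+1 -> R) : (4 <= L)%N ->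
  rayleigh (tadpole_adj L.+1 3) p g = N3 p L (fun k => g (inord k)) / dsum p L (fun k => g (inord k)).
Proof. by move=> L4; rewrite rayleighE denom_tad numer_tad //; lia. Qed.

Lemma lam_lb (R : realType) (n i : nat) (p : R) :
  has_lbound [set r : R | exists f : 'I_n -> R,
        [/\ in_CB (tadpole_adj n i) f, (exists x, f x != 0) & r = rayleigh (tadpole_adj n i) p f]].
Proof.
exists 0 => r [f [_ _ ->]]; rewrite rayleighE.
by apply: divr_ge0; [exact: numer_ge0 | exact: denom_ge0].
Qed.

Theorem lemma2p3 (R : realType) (n : nat) (p : R) :
  (5 <= n)%N -> 1 < p ->
  lambda1p (tadpole_adj n 3) p < lambda1p (tadpole_adj n 4) p.
Proof.
move=> n5 p1; have p0 : 0 < p by apply: lt_trans p1.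
case: n n5 => [//|L] n5.
have L4 : (4 <= L)%N := n5.
have iLL : inord L = ord_max :> 'I_L.+1 by apply: val_inj; rewrite /= inordK.
pose f0 := fun x : 'I_L.+1 => if val x == 0%N then 1 else 0 : R.
have f0B : in_CB (tadpole_adj L.+1 4) f0.
  by apply/inCB_tad => //; rewrite /f0 /= ifF //; apply/negbTE; lia.
have f0nz : exists x, f0 x != 0 by exists ord0; rewrite /f0 /= oner_eq0.
have [f [fB fnz fmin]] := @exists_minimizer _ _ (tadpole_adj L.+1 4) _ p0 (ex_intro _ f0 (conj f0B f0nz)).
set lam := rayleigh (tadpole_adj L.+1 4) p f.
have l4E : lambda1p (tadpole_adj L.+1 4) p = lam.
  apply/eqP; rewrite eq_le; apply/andP; split.
    by apply: (ge_inf (lam_lb _ _ _)); exists f.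
  apply: lb_le_inf; first by exists lam, f.
  by move=> r [g [gB gnz ->]]; exact: fmin.
pose F := fun k => f (inord k).
have fF : feas L F.
  split; first by rewrite /F iLL; apply/(inCB_tad f).
  by case: fnz => x fx; exists x; split; [rewrite -ltnS ltn_ord | rewrite /F inord_val].
have hF : N4 p L F <= lam * dsum p L F.
  by rewrite /lam rayleigh4 // mulrVK // unitfE gt_eqF // dsum_gt0.
have W : forall G, G L = 0 -> lam * dsum p L G <= N4 p L G.
  move=> G GL.
  pose g := fun x : 'I_L.+1 => G x.
  have [N4e N3e De] := @agree R p L (fun k => g (inord k)) G (ltnW L4)
    (fun k kL => congr1 G (inordK (kL : (k < L.+1)%N))).
  have [[k [kL Gk]]|hz] := pselect (exists k, (k <= L)%N /\ G k != 0).
    have gB : in_CB (tadpole_adj L.+1 4) g by apply/inCB_tad.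
    have gnz : exists x, g x != 0 by exists (inord k); rewrite /g inordK.
    have Dp : 0 < dsum p L G by apply: dsum_gt0; split => //; exists k.
    have := fmin g gB gnz; rewrite -/lam rayleigh4 // N4e De.
    by rewrite ler_pdivlMr // mulrC.
  have -> : dsum p L G = 0.
    apply: big1_seq => k /andP[_]; rewrite mem_iota add0n => /andP[_ kL].
    have -> : G k = 0.
      by apply/eqP; apply: contrapT => hk; apply: hz; exists k; split => //; exact/negP.
    exact: ww0.
  by rewrite mulr0 /N4 addr_ge0 // ?pathsum_ge0 ?ee_ge0.
have [G [fG hG]] := core p1 L4 W fF hF.
pose g := fun x : 'I_L.+1 => G x.
have [N4e N3e De] := @agree R p L (fun k => g (inord k)) G (ltnW L4)
  (fun k kL => congr1 G (inordK (kL : (k < L.+1)%N))).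
have gB : in_CB (tadpole_adj L.+1 3) g.
  apply/inCB_tad; [by [] | lia | by case: fG].
have gnz : exists x, g x != 0.
  by case: fG => _ [k [kL Gk]]; exists (inord k); rewrite /g inordK.
have Dp : 0 < dsum p L G by exact: dsum_gt0.
rewrite l4E.
apply: (le_lt_trans (ge_inf (lam_lb _ _ _) (ex_intro _ g (And3 gB gnz erefl)))).
by rewrite rayleigh3 // N3e De ltr_pdivrMr.
Qed.
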